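(* Let $T$ be a tree on $n$ vertices. Then $k(T)=3$ if and only if $T\in\mathcal{T}$, where $\mathcal{T}$ is the family of trees obtained by appending $b\ge 1$ pendent vertices to each leaf of a star, or to each leaf of a balanced double star (the same $b$ for every leaf).
   Context: For a connected graph $G=(V,E)$ and $v\in V$, the status of $v$ is $s(v)=\sum_{u\in V} d(v,u)$, where $d$ is the shortest-path distance; $k(G)$ is the number of distinct status values of vertices of $G$. A star is a tree of diameter $2$, i.e. $K_{1,m}$ with $m\ge 2$. A balanced double star is a graph obtained from $K_2$ by appending $a\ge 1$ pendent vertices to each of its two vertices (the same $a$ for both). *)

(* Defs.v *)
(* simple graphs as symmetric irreflexive relations on a finType. *)
From mathcomp Require Import all_boot.
Set Implicit Arguments. Unset Strict Implicit. Unset Printing Implicit Defensive.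

Section Graphs.
Variable T : finType.
Variable e : rel T.

Definition connectedg : Prop := forall x y : T, connect e x y.

Definition acyclicg : Prop :=
  forall p : seq T, uniq p -> 2 < size p -> ~~ cycle e p.

Definition is_tree : Prop := connectedg /\ acyclicg.

Fixpoint ball (k : nat) (x : T) : {set T} :=
  match k with
  | 0 => [set x]
  | k'.+1 => ball k' x :|: [set y | [exists z in ball k' x, e z y]]
  end.

(* shortest-path distance: d(x,y) = #{k : y not within distance k of x}
   (equal to the usual distance in a connected graph, since every distance is < #|T|) *)
Definition dist (x y : T) : nat :=
  \sum_(k < #|T|) nat_of_bool (y \notin ball k x).

Definition status (v : T) : nat := \sum_(u : T) dist v u.

Definition kstat : nat := size (undup [seq status v | v <- enum T]).

Definition graph_iso (M : finType) (eM : rel M) : Prop :=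
  exists f : T -> M, bijective f /\ forall x y, eM (f x) (f y) = e x y.

End Graphs.

(* Star K_{1,m} (center None, leaves Some (inl i)) with b pendent vertices
   Some (inr (i,j)) appended to each leaf i. *)
Definition star_pend_rel (m b : nat) : rel (option ('I_m + 'I_m * 'I_b)) :=
  fun x y =>
    match x, y with
    | None, Some (inl _) => true
    | Some (inl _), None => true
    | Some (inl i), Some (inr (i', _)) => i == i'
    | Some (inr (i', _)), Some (inl i) => i == i'
    | _, _ => false
    end.

(* Balanced double star: centers inl (inl c) (c : bool), joined to each other;
   leaves inl (inr (c,i)) (a of them on each center c); b pendent vertices
   inr (c,i,j) appended to each leaf (c,i). *)
Definition dstar_pend_rel (a b : nat)
  : rel ((bool + bool * 'I_a) + bool * 'I_a * 'I_b) :=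
  fun x y =>
    match x, y with
    | inl (inl c), inl (inl c') => c != c'
    | inl (inl c), inl (inr (c', _)) => c == c'
    | inl (inr (c', _)), inl (inl c) => c == c'
    | inl (inr (c, i)), inr (c', i', _) => (c == c') && (i == i')
    | inr (c', i', _), inl (inr (c, i)) => (c == c') && (i == i')
    | _, _ => false
    end.

Definition in_family (T : finType) (e : rel T) : Prop :=
  (exists m b : nat, 2 <= m /\ 1 <= b /\ graph_iso e (@star_pend_rel m b)) \/
  (exists a b : nat, 1 <= a /\ 1 <= b /\ graph_iso e (@dstar_pend_rel a b)).

(* Main.v *)
Require Import Defs.
From mathcomp Require Import all_boot.
From mathcomp Require Import zify.
Set Implicit Arguments. Unset Strict Implicit. Unset Printing Implicit Defensive.

Section Tree.
Variable T : finType.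
Variable e : rel T.
Hypothesis e_sym : symmetric e.
Hypothesis e_irr : irreflexive e.
Hypothesis conn : connectedg e.
Hypothesis acyc : acyclicg e.

Local Notation d := (dist e).
Local Notation s := (status e).
Local Notation n := #|T|.

Lemma ball0 x y : (y \in ball e 0 x) = (y == x).
Proof. by rewrite /= in_set1. Qed.

Lemma ballS k x y : (y \in ball e k.+1 x) =
  (y \in ball e k x) || [exists z in ball e k x, e z y].
Proof. by rewrite /= in_setU in_set. Qed.

Lemma ball_le k k' x y : k <= k' -> y \in ball e k x -> y \in ball e k' x.
Proof.
elim: k' => [|k' IH]; first by rewrite leqn0 => /eqP ->.
rewrite leq_eqVlt => /orP [/eqP -> //|]; rewrite ltnS => /IH H /H.
by rewrite ballS => ->.
Qed.

Lemma ball_edge k x u v : u \in ball e k x -> e u v -> v \in ball e k.+1 x.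
Proof. by move=> Hu Huv; rewrite ballS; apply/orP; right; apply/existsP; exists u; rewrite Hu. Qed.

Lemma ball_trans k j x y z : y \in ball e k x -> z \in ball e j y -> z \in ball e (k + j) x.
Proof.
move=> Hy; elim: j z => [|j IH] z; first by rewrite ball0 addn0 => /eqP ->.
rewrite ballS => /orP [/IH H|/existsP [w /andP [Hw Hwz]]].
  by apply: (ball_le _ H); rewrite addnS.
by rewrite addnS; apply: ball_edge (IH _ Hw) Hwz.
Qed.

Lemma ball_sym k x y : y \in ball e k x -> x \in ball e k y.
Proof.
elim: k y => [|k IH] y; first by rewrite !ball0 eq_sym.
rewrite ballS => /orP [/IH H|/existsP [z /andP [Hz Hzy]]].
  exact: (ball_le (leqnSn k) H).
have H1 : z \in ball e 1 y by apply: (ball_edge (u:=y)); rewrite ?ball0 // e_sym.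
by have := ball_trans H1 (IH _ Hz); rewrite add1n.
Qed.

Lemma ball_full x y : y \in ball e n.-1 x.
Proof.
have /connectP [p Hp Hy] := conn x y.
rewrite Hy; case: (shortenP Hp) => q Hq Huq _.
have Hs : size q <= n.-1.
  have H1 := card_uniqP Huq; have H2 := max_card (mem (x :: q)); rewrite /= in H1; rewrite H1 in H2; by rewrite -ltnS (ltn_predK H2).
apply: (ball_le Hs).
have: forall i, i <= size q -> nth x (x :: q) i \in ball e i x.
  elim=> [|i IH] Hi; first by rewrite ball0.
  apply: (ball_edge (IH (ltnW Hi))).
  by move/pathP: Hq => /(_ x i Hi).
by move/(_ (size q) (leqnn _)); rewrite -last_nth.
Qed.

Lemma distP x y k : (y \in ball e k x) = (d x y <= k).
Proof.
pose P := fun k => y \in ball e k x.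
have ex : exists k, P k by exists n.-1; exact: ball_full.
have HD : d x y = ex_minn ex.
  case: ex_minnP => D HD Hmin.
  have HDn : D <= n.-1 by apply: Hmin; exact: ball_full.
  have Hn : 0 < n by apply/card_gt0P; exists x.
  rewrite /dist.
  have -> : \sum_(k < n) (y \notin ball e k x) = \sum_(k < n) (k < D).
    apply: eq_bigr => i _; congr nat_of_bool.
    case: (ltnP i D) => Hi.
      by apply/negP => /Hmin; rewrite leqNgt Hi.
    by rewrite (ball_le Hi HD).
  have : D <= n by rewrite (leq_trans HDn) // leq_pred.
  elim: n => [|m IH] Hm; first by rewrite big_ord0; lia.
  rewrite big_ord_recr /=; case: (ltnP m D) => Hm'.
    have -> : D = m.+1 by lia.
    have -> : \sum_(i < m) (i < m.+1) = \sum_(i < m) 1.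
      by apply: eq_bigr => i _; rewrite ltnS ltnW.
    by rewrite sum1_card card_ord addn1.
  by rewrite addn0 IH.
rewrite HD; case: ex_minnP => D HD' Hmin.
apply/idP/idP; first exact: Hmin.
by move=> H; apply: ball_le HD'.
Qed.

Lemma dist_refl x : d x x = 0.
Proof. by apply/eqP; rewrite -leqn0 -distP ball0. Qed.

Lemma dist0 x y : d x y = 0 -> y = x.
Proof. by move=> H; apply/eqP; rewrite -ball0 distP H. Qed.

Lemma dist_sym x y : d x y = d y x.
Proof.
by apply/eqP; rewrite eqn_leq -!distP; apply/andP; split; apply: ball_sym; rewrite distP.
Qed.

Lemma dist_edge x u v : e u v -> d x v <= (d x u).+1.
Proof. by move=> Huv; rewrite -distP; apply: ball_edge Huv; rewrite distP. Qed.

Lemma dist_pred x y k : d x y = k.+1 -> exists z, e z y /\ d x z = k.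
Proof.
move=> H.
have : y \in ball e k.+1 x by rewrite distP H.
rewrite ballS => /orP [|/existsP [z /andP [Hz Hzy]]].
  by rewrite distP H ltnn.
exists z; split => //.
move: Hz; rewrite distP => Hz.
have := dist_edge x Hzy; rewrite H; lia.
Qed.

Lemma dist1 x y : d x y = 1 -> e x y.
Proof. by move/dist_pred => [z [Hz /dist0 Hzx]]; rewrite -Hzx. Qed.

Lemma edge_dist x y : e x y -> d x y = 1.
Proof.
move=> H; have := dist_edge x H; rewrite dist_refl.
case Hd: (d x y) => [|[|k]] //; move/dist0: Hd => Hyx.
by rewrite Hyx e_irr in H.
Qed.

Lemma edge_neq x y : e x y -> x != y.
Proof. by apply: contraTneq => ->; rewrite e_irr. Qed.


Lemma no_bridge x k : forall y1 y2 c, d x y1 = k -> d x y2 = k -> y1 != y2 ->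
  path e y1 (rcons c y2) -> uniq c -> all (fun z => k < d x z) c -> False.
Proof.
elim: k => [|k IH] y1 y2 c H1 H2 Hne Hp Hu Ha.
  by move: Hne; rewrite (dist0 H1) (dist0 H2) eqxx.
have [p1 [Hp1 Hd1]] := dist_pred H1.
have [p2 [Hp2 Hd2]] := dist_pred H2.
have Hy2c : y2 \notin c by apply/negP => /(allP Ha); rewrite H2 ltnn.
have Hy1c : y1 \notin c by apply/negP => /(allP Ha); rewrite H1 ltnn.
case: (eqVneq p1 p2) => [Heq|Hne'].
  have Hc : cycle e (p1 :: y1 :: rcons c y2).
    rewrite /cycle /= Hp1 /= rcons_path Hp last_rcons /= -Heq in Hp2 *.
    by rewrite e_sym Hp2.
  have Hs : 2 < size (p1 :: y1 :: rcons c y2) by rewrite /= size_rcons.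
  have Hu' : uniq (p1 :: y1 :: rcons c y2).
    have N1 : p1 != y1 by apply/negP => /eqP Heq'; move: Hd1; rewrite Heq' H1; lia.
    have N2 : p1 != y2 by apply/negP => /eqP Heq'; move: Hd1; rewrite Heq' H2; lia.
    have N3 : p1 \notin c by apply/negP => /(allP Ha); rewrite Hd1; lia.
    by rewrite /= !inE !mem_rcons !inE !negb_or N1 N2 N3 Hne Hy1c rcons_uniq Hy2c Hu.
  by move: (acyc Hu' Hs); rewrite Hc.
apply: (IH p1 p2 (y1 :: rcons c y2)) => //.
- by rewrite /= Hp1 rcons_path Hp last_rcons e_sym Hp2.
- by rewrite /= mem_rcons inE negb_or Hne Hy1c rcons_uniq Hy2c Hu.
- rewrite /= H1 leqnn /= all_rcons H2 leqnn /=.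
  by apply/allP => z /(allP Ha); apply: ltnW.
Qed.

Lemma T1 x u v : e u v -> d x u != d x v.
Proof.
move=> Huv; apply/negP => /eqP H.
by apply: (no_bridge (c := [::]) H (erefl _) (edge_neq Huv)) => //=; rewrite Huv.
Qed.

Lemma T2 x z1 z2 y k : e z1 y -> e z2 y -> d x z1 = k -> d x z2 = k -> d x y = k.+1 -> z1 = z2.
Proof.
move=> H1 H2 D1 D2 D; apply/eqP/negPn/negP => Hne.
apply: (no_bridge (c := [:: y]) D1 D2 Hne) => //=.
  by rewrite H1 e_sym H2.
by rewrite D ltnSn.
Qed.

Lemma edge_dich x u v : e u v -> d x v = (d x u).+1 \/ d x u = (d x v).+1.
Proof.
move=> Huv; have H1 := dist_edge x Huv.
have Hvu : e v u by rewrite e_sym.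
have H2 := dist_edge x Hvu.
have H3 := T1 x Huv; move: H3 H1 H2; rewrite neq_ltn; lia.
Qed.


Definition side u v := [set x | d u x < d v x].
Definition lf v p := forall z, e v z = (z == p).
Definition Lset m u := [set w | e u w & w != m].

Lemma card_sumI (A : {set T}) : #|A| = \sum_x (x \in A : nat).
Proof. by rewrite -sum1_card big_mkcond /=; apply: eq_bigr => x _; case: (x \in A). Qed.

Lemma side_compl u v : e u v -> side v u = ~: side u v.
Proof.
move=> Huv; apply/setP => x; rewrite !inE -!(dist_sym x).
have := T1 x Huv; rewrite neq_ltn; case/orP => H.
  by rewrite H ltnNge ltnW.
by rewrite H ltnNge negbK ltnW.
Qed.

Lemma side_card u v : e u v -> #|side u v| + #|side v u| = n.
Proof. by move=> H; rewrite (side_compl H) cardsC. Qed.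

Lemma status_edge u v : e u v -> s u + #|side u v| = s v + #|side v u|.
Proof.
move=> Huv; rewrite /status !card_sumI -!big_split /=.
apply: eq_bigr => x _; rewrite !inE (dist_sym u) (dist_sym v).
case: (edge_dich x Huv) => ->; rewrite ?ltnSn; rewrite ltnNge leqnSn /=; lia.
Qed.

Lemma leaf_edge l p : lf l p -> e l p.
Proof. by move=> H; rewrite H. Qed.

Lemma leaf_dist l p y : lf l p -> y != l -> d y l = (d y p).+1.
Proof.
move=> Hl Hy; case Hd: (d y l) => [|k].
  by move/dist0: Hd => Hd; rewrite Hd eqxx in Hy.
have [z [Hz Hdz]] := dist_pred Hd.
by move: Hz; rewrite e_sym Hl => /eqP <-; rewrite Hdz.
Qed.

Lemma leaf_status l p : lf l p -> s l + 2 = s p + n.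
Proof.
move=> Hl; have Hlp := leaf_edge Hl.
have Hs : side l p = [set l].
  apply/setP => x; rewrite !inE; case: (eqVneq x l) => [->|Hx].
    by rewrite dist_refl (dist_sym p) (edge_dist Hlp).
  by rewrite (dist_sym l) (dist_sym p) (leaf_dist Hl Hx) ltnNge leqnSn.
have := status_edge Hlp; have := side_card Hlp; rewrite Hs cards1; lia.
Qed.

Lemma side_self u v : e u v -> u \in side u v.
Proof. by move=> H; rewrite inE dist_refl (edge_dist (_ : e v u)) // e_sym. Qed.

Lemma side_nb u v z : e u v -> e u z -> z != v -> z \in side u v.
Proof.
move=> Huv Huz Hz; rewrite inE (edge_dist Huz).
have H1 : d z u = 1 by rewrite dist_sym edge_dist.
have H2 : d z v != 0 by apply: contra Hz => /eqP /dist0 ->.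
rewrite (dist_sym v); case: (edge_dich z Huv); lia.
Qed.

Lemma side_notin u v : e u v -> v \notin side u v.
Proof. by move=> H; rewrite inE dist_refl. Qed.

Lemma side_closed u m x z k : e u m -> x \in side u m -> d u x = k.+1 -> e z x ->
  d u z = k -> z \in side u m.
Proof.
move=> Hum; rewrite inE => Hx Hdx Hzx Hdz.
have H1 : d m x = k.+2.
  move: Hx Hdx; rewrite -!(dist_sym x); case: (edge_dich x Hum); lia.
have H2 := dist_edge m Hzx.
move: H2; move: Hdz H1; rewrite inE -!(dist_sym z) -!(dist_sym x); case: (edge_dich z Hum); lia.
Qed.

Lemma side_sup u m : e u m -> (forall w, e u w -> w != m -> lf w u) ->
  side u m = u |: Lset m u.
Proof.
move=> Hum Hlf; apply/setP => x; rewrite !inE.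
case: (eqVneq x u) => [->|Hxu] /=; first by have := side_self Hum; rewrite inE.
apply/idP/idP; last first.
  by case/andP => H1 H2; have := side_nb Hum H1 H2; rewrite inE.
move=> Hx.
have far : forall k y, y \in side u m -> d u y = k.+2 -> False.
  elim=> [|k IH] y Hy Hdy.
    have [z [Hzy Hdz]] := dist_pred Hdy.
    have Hzs := side_closed Hum Hy Hdy Hzy Hdz.
    have Huz := dist1 Hdz.
    have Hzm : z != m by apply: contraTneq Hzs => ->; apply: side_notin.
    have := Hlf z Huz Hzm y; rewrite Hzy => /esym /eqP Hyu.
    by move: Hdy; rewrite Hyu dist_refl.
  have [z [Hzy Hdz]] := dist_pred Hdy.
  exact: IH z (side_closed Hum Hy Hdy Hzy Hdz) Hdz.
have Hxs : x \in side u m by rewrite inE.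
case Hd: (d u x) => [|[|k]].
- by move/dist0: Hd => Hd; rewrite Hd eqxx in Hxu.
- rewrite (dist1 Hd) /=; apply/negP => /eqP Hxm; move: Hxs; rewrite Hxm; apply/negP; exact: side_notin.
- by case: (far k x Hxs Hd).
Qed.

Lemma sup_status u m : e u m -> (forall w, e u w -> w != m -> lf w u) ->
  s u + 2 * (#|Lset m u|).+1 = s m + n.
Proof.
move=> Hum Hlf; have := status_edge Hum; have := side_card Hum.
rewrite side_sup // cardsU1 inE e_irr /=; lia.
Qed.

Lemma convex u v w : e v u -> e v w -> u != w -> 2 * s v < s u + s w.
Proof.
move=> Hvu Hvw Huw.
have Huv : e u v by rewrite e_sym.
have Hwv : e w v by rewrite e_sym.
have E1 := status_edge Huv; have C1 := side_card Huv.
have E2 := status_edge Hwv; have C2 := side_card Hwv.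
have Hdis : side u v :&: side w v = set0.
  apply/setP => x; rewrite !inE; apply/negP => /andP [H1 H2].
  rewrite -!(dist_sym x) in H1 H2.
  have H1' : d x v = (d x u).+1 by case: (edge_dich x Huv) => H; lia.
  have H2' : d x v = (d x w).+1 by case: (edge_dich x Hwv) => H; lia.
  have := T2 Huv Hwv (erefl _) (_ : d x w = d x u) H1'.
  by move=> /(_ ltac:(lia)) Heq; rewrite Heq eqxx in Huw.
have Hv : v \notin side u v :|: side w v by rewrite inE negb_or !side_notin.
have H3 := cardsUI (side u v) (side w v); rewrite Hdis cards0 addn0 in H3.
have H4 := max_card (mem (v |: (side u v :|: side w v))).
rewrite cardsU1 Hv in H4.
lia.
Qed.

Lemma min_strict v : (forall u, e v u -> s v <= s u) ->
  forall k y z, d v y = k.+2 -> e z y -> d v z = k.+1 -> s z < s y.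
Proof.
move=> Hmin; elim=> [|k IH] y z Hy Hzy Hz.
  have Hvz := dist1 Hz.
  have Hvy : v != y by apply/negP => /eqP Hvy; move: Hy; rewrite -Hvy dist_refl.
  have := convex (_ : e z v) Hzy Hvy; rewrite e_sym Hvz => /(_ isT).
  have := Hmin z Hvz; lia.
have [w [Hwz Hw]] := dist_pred Hz.
have Hwy : w != y by apply/negP => /eqP Hwy; move: Hw; rewrite Hwy Hy; lia.
have := convex (_ : e z w) Hzy Hwy; rewrite e_sym Hwz => /(_ isT).
have := IH z w Hz Hwz Hw; lia.
Qed.

Lemma min_global v : (forall u, e v u -> s v <= s u) -> forall y, s v <= s y.
Proof.
move=> Hmin y; move Hk: (d v y) => k; elim: k y Hk => [|k IH] y Hk.
  by rewrite (dist0 Hk).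
have [z [Hzy Hz]] := dist_pred Hk.
apply: (leq_trans (IH z Hz)).
case: k IH Hk Hz => [|k] IH Hk Hz.
  by rewrite (dist0 Hz); apply: Hmin; rewrite -(dist0 Hz).
exact: ltnW (min_strict Hmin Hk Hzy Hz).
Qed.


Definition Ls := undup [seq s v | v <- enum T].

Lemma memLs w : (w \in Ls) = [exists v, s v == w].
Proof.
rewrite mem_undup; apply/mapP/existsP => [[v _ ->]|[v /eqP <-]]; first by exists v.
by exists v; rewrite ?mem_enum.
Qed.

Lemma kstat_le2 x y : (forall v, s v \in [:: x; y]) -> kstat e <= 2.
Proof.
move=> H; rewrite /kstat -/Ls.
have -> : 2 = size [:: x; y] by [].
apply: uniq_leq_size; first exact: undup_uniq.
by move=> w; rewrite memLs => /existsP [v /eqP <-].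
Qed.

Lemma kstat_three a b c : kstat e = 3 -> s a != s b -> s a != s c -> s b != s c ->
  forall v, s v \in [:: s a; s b; s c].
Proof.
move=> Hk Hab Hac Hbc v; apply/negPn/negP => Hv.
have : size [:: s a; s b; s c; s v] <= size Ls.
  apply: uniq_leq_size.
    move: Hv; rewrite !inE !negb_or => /and3P [H1 H2 H3].
    by rewrite /= !inE !negb_or Hab Hac Hbc !(eq_sym _ (s v)) H1 H2 H3.
  move=> w; rewrite memLs !inE => /or4P [] /eqP ->; apply/existsP; by [exists a|exists b|exists c|exists v].
by rewrite /kstat -/Ls in Hk; rewrite Hk.
Qed.

Lemma kstat_third a b : kstat e = 3 -> exists v, s v != s a /\ s v != s b.
Proof.
move=> Hk; case: (boolP [exists v, (s v != s a) && (s v != s b)]).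
  by case/existsP => v /andP [H1 H2]; exists v.
move=> /existsPn H; suff : 3 <= 2 by [].
rewrite -Hk; apply: (kstat_le2 (x := s a) (y := s b)) => v; have := H v; rewrite negb_and !negbK !inE.
by case/orP => ->; rewrite ?orbT.
Qed.


Lemma kstat_ex : kstat e = 3 -> exists a b c, [/\ s a != s b, s a != s c & s b != s c].
Proof.
rewrite /kstat -/Ls; have Hu := undup_uniq [seq s v | v <- enum T].
rewrite -/Ls in Hu.
have Hm : forall w, w \in Ls -> exists v, s v = w by move=> w; rewrite memLs => /existsP [v /eqP]; exists v.
case: Ls Hu Hm => [|x [|y [|z [|]]]] //= Hu Hm _.
have [a Ha] := Hm x (mem_head _ _).
have [b Hb] := Hm y ltac:(by rewrite !inE eqxx orbT).
have [c Hc] := Hm z ltac:(by rewrite !inE eqxx !orbT).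
exists a, b, c; rewrite Ha Hb Hc.
by move: Hu; rewrite /= !inE !negb_or => /and3P [/andP [-> ->] -> _].
Qed.

Lemma kstat_eq3 a b c : s a != s b -> s a != s c -> s b != s c ->
  (forall v, s v \in [:: s a; s b; s c]) -> kstat e = 3.
Proof.
move=> Hab Hac Hbc H; rewrite /kstat -/Ls.
have -> : 3 = size [:: s a; s b; s c] by [].
apply: perm_size; apply: uniq_perm; first exact: undup_uniq.
  by rewrite /= !inE !negb_or Hab Hac Hbc.
move=> w; rewrite memLs; apply/existsP/idP => [[v /eqP <-]|]; first exact: H.
by rewrite !inE => /or3P [] /eqP ->; [exists a|exists b|exists c].
Qed.

Lemma has_nb v : 1 < n -> exists p, e v p.
Proof.
move=> Hn; have : 0 < #|[set~ v]| by rewrite cardsC1; lia.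
case/card_gt0P => y; rewrite !inE => Hy.
case Hd: (d y v) => [|k]; first by move/dist0: Hd => Hd; rewrite Hd eqxx in Hy.
by have [z [Hz _]] := dist_pred Hd; exists z; rewrite e_sym.
Qed.

Lemma dich v p : e v p -> lf v p \/ exists w, e v w /\ w != p.
Proof.
move=> Hvp; case: (boolP [exists w, e v w && (w != p)]).
  by case/existsP => w /andP [H1 H2]; right; exists w.
move/existsPn => H; left => z; case: (eqVneq z p) => [->|Hz]; first by rewrite Hvp.
by have := H z; rewrite Hz andbT => /negbTE.
Qed.

Lemma lemG (X : {set T}) p : p \in X ->
  (forall w u, w \notin X -> u \in X -> e u w -> lf w u) ->
  forall y, y \notin X -> exists u, u \in X /\ lf y u.
Proof.
move=> Hp H y; move Hk: (d p y) => k; elim: k y Hk => [|k IH] y Hk Hy.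
  by move: Hy; rewrite (dist0 Hk) Hp.
have [z [Hzy Hz]] := dist_pred Hk.
case: (boolP (z \in X)) => HzX; first by exists z; split => //; apply: H.
have [u [Hu Hzu]] := IH z Hz HzX.
by move: (Hzu y); rewrite Hzy => /esym /eqP Hyu; move: Hy; rewrite Hyu Hu.
Qed.

Lemma leaf_side_in m m' u x : e m m' -> u \in side m m' -> u != m -> lf x u ->
  x \in side m m'.
Proof.
move=> Hmm' Hu Hum Hx.
have Hxm : x != m.
  apply/negP => /eqP Hxm; move: (Hx m'); rewrite -Hxm in Hmm' *; rewrite Hmm'.
  by move/esym/eqP => Hu'; move: Hu; rewrite -Hu' inE dist_refl.
have Hxm' : x != m'.
  apply/negP => /eqP Hxm'; move: (Hx m); rewrite Hxm' e_sym Hmm' => /esym /eqP Hu'.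
  by rewrite Hu' eqxx in Hum.
rewrite eq_sym in Hxm; rewrite eq_sym in Hxm'.
by move: Hu; rewrite !inE (leaf_dist Hx Hxm) (leaf_dist Hx Hxm').
Qed.


Lemma side_count m0 m1 b : e m0 m1 ->
  (forall u, u \in Lset m1 m0 -> (forall w, e u w -> w != m0 -> lf w u) /\ #|Lset m0 u| = b) ->
  (forall x, x = m0 \/ x = m1 \/ x \in Lset m1 m0 \/ x \in Lset m0 m1 \/
      exists u, (u \in Lset m1 m0 \/ u \in Lset m0 m1) /\ lf x u) ->
  #|side m0 m1| = 1 + #|Lset m1 m0| * b.+1.
Proof.
move=> H01 HA0 Hcl.
have H10 : e m1 m0 by rewrite e_sym.
set A0 := Lset m1 m0.
set LA0 := [set x | [exists u in A0, x \in Lset m0 u]].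
have HlfA0 : forall u x, u \in A0 -> x \in Lset m0 u -> lf x u.
  move=> u x Hu; rewrite inE => /andP [H1 H2]; exact: (HA0 u Hu).1.
have HuA0 : forall u, u \in A0 -> u \in side m0 m1 /\ u != m0.
  move=> u; rewrite inE => /andP [H1 H2]; split; first exact: side_nb.
  by apply: edge_neq; rewrite e_sym.
have HS : side m0 m1 = m0 |: (A0 :|: LA0).
  apply/setP => x; rewrite in_setU1 in_setU; apply/idP/idP.
    move=> Hx; case: (Hcl x) => [->|[Hx1|[HxA|[HxA1|[u [Hu Hxu]]]]]].
    - by rewrite eqxx.
    - by move: Hx; rewrite Hx1 (negbTE (side_notin H01)).
    - by rewrite HxA orbT.
    - have : x \in side m1 m0 by move: HxA1; rewrite inE => /andP [H1 H2]; apply: side_nb.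
      by rewrite (side_compl H01) inE Hx.
    - case: Hu => Hu.
        apply/orP; right; apply/orP; right; rewrite inE; apply/existsP; exists u; rewrite Hu /= inE.
        rewrite e_sym (leaf_edge Hxu) /=; apply/negP => /eqP Hx0.
        move: (Hxu m1); rewrite -Hx0 in H01 *; rewrite H01 => /esym /eqP Hu1.
        by move: Hu; rewrite inE Hu1 eqxx andbF.
      have Hus : u \in side m1 m0 by move: Hu; rewrite inE => /andP [H1 H2]; apply: side_nb.
      have Hum : u != m1 by move: Hu; rewrite inE => /andP [H1 _]; apply: edge_neq; rewrite e_sym.
      have := leaf_side_in H10 Hus Hum Hxu.
      by rewrite (side_compl H01) inE Hx.
  case/or3P => [/eqP ->|HxA|].
  - exact: side_self.
  - by move: HxA; rewrite inE => /andP [H1 H2]; apply: side_nb.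
  - rewrite inE => /existsP [u /andP [Hu Hxu]].
    have [Hus Hum] := HuA0 u Hu.
    exact: leaf_side_in H01 Hus Hum (HlfA0 u x Hu Hxu).
have Hm0 : m0 \notin A0 :|: LA0.
  rewrite !inE e_irr /= negb_exists; apply/forallP => u; rewrite !inE eqxx.
  by rewrite !andbF.
have Hdis : A0 :&: LA0 = set0.
  apply/setP => x; rewrite !inE; apply/negP => /andP [HxA /existsP [u /andP [Hu Hxu]]].
  have := HlfA0 u x Hu Hxu m0; move: HxA; rewrite e_sym => /andP [-> _] /esym /eqP Hu0.
  by move: Hu; rewrite -Hu0 inE e_irr.
have HLA : #|LA0| = #|A0| * b.
  rewrite card_sumI.
  have Hx : forall x, (x \in LA0 : nat) = \sum_(u in A0) (x \in Lset m0 u : nat).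
    move=> x; case: (boolP (x \in LA0)) => Hx.
      move: (Hx); rewrite inE => /existsP [u /andP [Hu Hxu]].
      rewrite (bigD1 u) //= Hxu big1 // => u' /andP [Hu' Hne].
      case: (boolP (x \in Lset m0 u')) => // Hxu'.
      have := HlfA0 u x Hu Hxu u'; move: Hxu'; rewrite inE e_sym => /andP [-> _] /esym /eqP Hu'u.
      by rewrite Hu'u eqxx in Hne.
    rewrite big1 // => u Hu; case: (boolP (x \in Lset m0 u)) => // Hxu.
    by move: Hx; rewrite inE => /existsP; case; exists u; rewrite Hu Hxu.
  under eq_bigr do rewrite Hx.
  rewrite exchange_big /= -sum_nat_const; apply: eq_bigr => u Hu.
  by rewrite -card_sumI (HA0 u Hu).2.
rewrite HS cardsU1 Hm0.
have := cardsUI A0 LA0; rewrite Hdis cards0 addn0 => ->.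
rewrite HLA mulnS; lia.
Qed.


Lemma dist_tri x y z : d x z <= d x y + d y z.
Proof. by rewrite -distP; apply: (ball_trans (y := y)); rewrite distP. Qed.

Lemma no_cross p q x y : e p q -> x \in side p q -> y \in side q p -> e x y -> x = p /\ y = q.
Proof.
move=> Hpq; rewrite !inE => Hx Hy Hxy.
have Hyx : e y x by rewrite e_sym.
have E1 := dist_edge p Hxy; have E2 := dist_edge q Hyx.
have Hpx : d q x = (d p x).+1.
  move: Hx; rewrite -!(dist_sym x); case: (edge_dich x Hpq); lia.
have Hqy : d p y = (d q y).+1.
  move: Hy; rewrite -!(dist_sym y); case: (edge_dich y Hpq); lia.
have E3 := dist_edge p Hyx; have E4 := dist_edge q Hxy.
have Ha : d p x = d q y by lia.
case Hk: (d p x) => [|k].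
  have := dist0 Hk => ->; split => //.
  by move: Ha; rewrite Hk => /esym /dist0 ->.
have [w [Hwy Hw]] : exists w, e w y /\ d q w = k by apply: dist_pred; lia.
have Hpw : d p w = k.+1.
  have := dist_tri p q w; rewrite (edge_dist Hpq) Hw.
  have := dist_edge p Hwy; lia.
have Hpy : d p y = k.+2 by lia.
have Hxw := T2 Hxy Hwy Hk Hpw Hpy.
by move: Hpx; rewrite Hxw; lia.
Qed.

Lemma iso_of (M : finType) (r : rel M) (g : M -> T) : injective g ->
  (forall x, exists z, g z = x) -> (forall x y, r x y = e (g x) (g y)) -> graph_iso e r.
Proof.
move=> Hinj Hsur Hr.
have Hbij : bijective g.
  apply: inj_card_bij => //; rewrite -(card_codom Hinj).
  apply: subset_leq_card; apply/subsetP => x _; apply/codomP.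
  by have [z Hz] := Hsur x; exists z.
case: Hbij => g' H1 H2; exists g'; split; first by exists g.
by move=> x y; rewrite Hr !H2.
Qed.


Lemma iso_star c b :
  (exists p q, [/\ p != q, e c p & e c q]) ->
  (forall u, u \in [set u | e c u] -> #|Lset c u| = b) ->
  (forall u, u \in [set u | e c u] -> forall w, e u w -> w != c -> lf w u) ->
  (forall x, x = c \/ x \in [set u | e c u] \/ exists u, u \in [set u | e c u] /\ lf x u) ->
  graph_iso e (@star_pend_rel #|[set u | e c u]| b).
Proof.
set A := [set u | e c u] => Hc2 HL Hlf Hcl.
have LL : forall u x, u \in A -> x \in Lset c u -> lf x u.
  by move=> u x Hu; rewrite inE => /andP [H1 H2]; apply: Hlf.
have Hlfc : forall u v, u \in A -> lf u v -> v = c.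
  by move=> u v; rewrite inE => Hu Huv; move: (Huv c); rewrite e_sym Hu => /esym /eqP.
pose uA (i : nat) := nth c (enum A) i.
pose lA (i j : nat) := nth c (enum (Lset c (uA i))) j.
have uA_in : forall i, i < #|A| -> uA i \in A.
  by move=> i Hi; rewrite -mem_enum; apply: mem_nth; rewrite -cardE.
have lA_in : forall i j, i < #|A| -> j < b -> lA i j \in Lset c (uA i).
  by move=> i j Hi Hj; rewrite -mem_enum; apply: mem_nth; rewrite -cardE HL // uA_in.
have uA_inj : forall i i', i < #|A| -> i' < #|A| -> (uA i == uA i') = (i == i').
  by move=> i i' Hi Hi'; apply: nth_uniq; rewrite -?cardE // enum_uniq.
have lA_inj : forall i j j', i < #|A| -> j < b -> j' < b -> (lA i j == lA i j') = (j == j').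
  by move=> i j j' Hi Hj Hj'; apply: nth_uniq; rewrite -?cardE ?HL ?uA_in // enum_uniq.
have lA_lf : forall i j, i < #|A| -> j < b -> lf (lA i j) (uA i).
  by move=> i j Hi Hj; apply: LL; [apply: uA_in|apply: lA_in].
have lA_nc : forall i j, i < #|A| -> j < b -> lA i j != c.
  by move=> i j Hi Hj; have := lA_in i j Hi Hj; rewrite inE => /andP [].
have uA_nc : forall i, i < #|A| -> uA i != c.
  move=> i Hi; have := uA_in i Hi; rewrite inE => H; apply/negP => /eqP Heq.
  by move: H; rewrite Heq e_irr.
pose g (z : option ('I_#|A| + 'I_#|A| * 'I_b)) : T :=
  match z with
  | None => c
  | Some (inl i) => uA i
  | Some (inr (i, j)) => lA i j
  end.
apply: (iso_of (g := g)).
- move=> [[i|[i j]]|] [[i'|[i' j']]|] /=; move=> Heq.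
  + by move/eqP: Heq; rewrite uA_inj // => /eqP Hii; congr (Some (inl _)); apply: val_inj.
  + have := lA_lf i' j' (ltn_ord _) (ltn_ord _); rewrite -Heq => /(Hlfc _ _ (uA_in _ (ltn_ord _))) Hc.
    by move: (uA_in i' (ltn_ord _)); rewrite Hc inE e_irr.
  + by move: (uA_nc i (ltn_ord _)); rewrite Heq eqxx.
  + have := lA_lf i j (ltn_ord _) (ltn_ord _); rewrite Heq => /(Hlfc _ _ (uA_in _ (ltn_ord _))) Hc.
    by move: (uA_in i (ltn_ord _)); rewrite Hc inE e_irr.
  + have Hii : i = i'.
      have H1 := lA_lf i j (ltn_ord _) (ltn_ord _).
      have H2 := lA_lf i' j' (ltn_ord _) (ltn_ord _).
      move: (H1 (uA i)); rewrite eqxx Heq H2 => /eqP.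
      by move/eqP; rewrite eq_sym uA_inj // => /eqP /val_inj.
    subst i'; congr (Some (inr (_, _))).
    by move/eqP: Heq; rewrite lA_inj // => /eqP Hjj; apply: val_inj.
  + by move: (lA_nc i j (ltn_ord _) (ltn_ord _)); rewrite Heq eqxx.
  + by move: (uA_nc i' (ltn_ord _)); rewrite Heq eqxx.
  + by move: (lA_nc i' j' (ltn_ord _) (ltn_ord _)); rewrite Heq eqxx.
  + by [].
- move=> x; case: (Hcl x) => [->|[Hx|[u [Hu Hxu]]]]; first by exists None.
    have Hi : index x (enum A) < #|A| by rewrite cardE index_mem mem_enum.
    by exists (Some (inl (Ordinal Hi))); rewrite /= /uA nth_index ?mem_enum.
  have Hi : index u (enum A) < #|A| by rewrite cardE index_mem mem_enum.
  have HuA : uA (index u (enum A)) = u by rewrite /uA nth_index ?mem_enum.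
  have HxL : x \in Lset c u.
    rewrite inE e_sym (leaf_edge Hxu) /=; apply/negP => /eqP Hxc.
    case: Hc2 => p [q [Hpq Hp Hq]].
    move: (Hxu p) (Hxu q); rewrite Hxc Hp Hq => /esym /eqP Hpu /esym /eqP Hqu.
    by rewrite Hpu Hqu eqxx in Hpq.
  have Hj : index x (enum (Lset c u)) < b by rewrite -(HL u Hu) cardE index_mem mem_enum.
  exists (Some (inr (Ordinal Hi, Ordinal Hj))); rewrite /= /lA HuA.
  by rewrite nth_index ?mem_enum.
- move=> [[i|[i j]]|] [[i'|[i' j']]|] /=.
  + apply/esym/negbTE/negP => He.
    have Hi : e c (uA i) by have := uA_in i (ltn_ord _); rewrite inE.
    have Hi' : e c (uA i') by have := uA_in i' (ltn_ord _); rewrite inE.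
    case: (eqVneq (uA i) (uA i')) => [Heq|Hne]; first by move: He; rewrite Heq e_irr.
    by have := T1 c He; rewrite (edge_dist Hi) (edge_dist Hi').
  + rewrite e_sym (lA_lf i' j' (ltn_ord _) (ltn_ord _)) uA_inj //.
  + by have := uA_in i (ltn_ord _); rewrite inE e_sym.
  + by rewrite (lA_lf i j (ltn_ord _) (ltn_ord _)) uA_inj.
  + apply/esym; rewrite (lA_lf i j (ltn_ord _) (ltn_ord _)); apply/negP => /eqP Heq.
    have := lA_lf i' j' (ltn_ord _) (ltn_ord _); rewrite Heq => /(Hlfc _ _ (uA_in _ (ltn_ord _))) Hc.
    by move: (uA_in i' (ltn_ord _)); rewrite Hc inE e_irr.
  + rewrite (lA_lf i j (ltn_ord _) (ltn_ord _)); apply/esym/negP => /eqP Hc.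
    by move: (uA_nc i (ltn_ord _)); rewrite Hc eqxx.
  + by have := uA_in i' (ltn_ord _); rewrite inE.
  + rewrite e_sym (lA_lf i' j' (ltn_ord _) (ltn_ord _)); apply/esym/negP => /eqP Hc.
    by move: (uA_nc i' (ltn_ord _)); rewrite Hc eqxx.
  + by rewrite e_irr.
Qed.


Definition mc (m0 m1 : T) (c : bool) := if c then m0 else m1.
Definition Aset m0 m1 c := Lset (mc m0 m1 (~~ c)) (mc m0 m1 c).

Lemma iso_dstar m0 m1 a b : e m0 m1 ->
  (forall c, #|Aset m0 m1 c| = a) ->
  (forall c u, u \in Aset m0 m1 c -> #|Lset (mc m0 m1 c) u| = b) ->
  (forall c u, u \in Aset m0 m1 c -> forall w, e u w -> w != mc m0 m1 c -> lf w u) ->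
  (forall x, x = m0 \/ x = m1 \/ (exists c, x \in Aset m0 m1 c) \/
       exists c u, u \in Aset m0 m1 c /\ lf x u) ->
  graph_iso e (@dstar_pend_rel a b).
Proof.
move=> H01 HA HL Hlf Hcl.
have bn : forall c c' : bool, c != c' -> c' = ~~ c by case; case.
set M := mc m0 m1. set A := Aset m0 m1.
have HM : forall c, e (M c) (M (~~ c)) by case; rewrite /M /mc //= e_sym.
have HMne : forall c c', (M c == M c') = (c == c').
  move=> c c'; case: (eqVneq c c') => [->|Hcc]; first by rewrite eqxx.
  rewrite (bn _ _ Hcc); by apply/negbTE/edge_neq.
have Ain : forall c u, u \in A c -> e (M c) u /\ u != M (~~ c).
  by move=> c u; rewrite inE => /andP.
have A_nadj : forall c u, u \in A c -> ~~ e (M (~~ c)) u.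
  move=> c u /Ain [H1 H2]; apply/negP => H3.
  by have := T1 (M c) H3; rewrite (edge_dist H1) (edge_dist (HM c)).
have A_nm : forall c c' u, u \in A c -> u != M c'.
  move=> c c' u Hu; have [H1 H2] := Ain c u Hu.
  case: (eqVneq c' c) => [Hcc|Hcc]; first by rewrite Hcc eq_sym edge_neq.
  by rewrite eq_sym in Hcc; rewrite (bn _ _ Hcc).
have A_disj : forall c c' u, u \in A c -> u \in A c' -> c = c'.
  move=> c c' u Hu Hu'; case: (eqVneq c c') => // Hcc.
  have Hc' := bn _ _ Hcc.
  have [H1 _] := Ain c' u Hu'; rewrite Hc' in H1.
  by move: (A_nadj c u Hu); rewrite H1.
have Hlfc : forall c u v, u \in A c -> lf u v -> v = M c.
  move=> c u v Hu Huv; have [H1 _] := Ain c u Hu.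
  by move: (Huv (M c)); rewrite e_sym H1 => /esym /eqP.
have LL : forall c u x, u \in A c -> x \in Lset (M c) u -> lf x u.
  by move=> c u x Hu; rewrite inE => /andP [H1 H2]; apply: (Hlf c).
pose uA c (i : nat) := nth (M c) (enum (A c)) i.
pose lA c (i j : nat) := nth (M c) (enum (Lset (M c) (uA c i))) j.
have uA_in : forall c i, i < a -> uA c i \in A c.
  by move=> c i Hi; rewrite -mem_enum; apply: mem_nth; rewrite -cardE HA.
have lA_in : forall c i j, i < a -> j < b -> lA c i j \in Lset (M c) (uA c i).
  by move=> c i j Hi Hj; rewrite -mem_enum; apply: mem_nth; rewrite -cardE (HL c) // uA_in.
have uA_inj : forall c i i', i < a -> i' < a -> (uA c i == uA c i') = (i == i').
  by move=> c i i' Hi Hi'; apply: nth_uniq; rewrite -?cardE ?HA // enum_uniq.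
have lA_inj : forall c i j j', i < a -> j < b -> j' < b -> (lA c i j == lA c i j') = (j == j').
  by move=> c i j j' Hi Hj Hj'; apply: nth_uniq; rewrite -?cardE ?(HL c) ?uA_in // enum_uniq.
have lA_lf : forall c i j, i < a -> j < b -> lf (lA c i j) (uA c i).
  by move=> c i j Hi Hj; apply: (LL c); [apply: uA_in|apply: lA_in].
have lA_nm : forall c c' i j, i < a -> j < b -> lA c i j != M c'.
  move=> c c' i j Hi Hj; apply/negP => /eqP Heq.
  have := lA_lf c i j Hi Hj; rewrite Heq => Hl.
  have := Hl (M (~~ c')); rewrite HM => /esym /eqP Hu.
  by have := A_nm c (~~ c') _ (uA_in c i Hi); rewrite -Hu eqxx.
have uA_eq : forall c c' i i', i < a -> i' < a -> (uA c i == uA c' i') = (c == c') && (i == i').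
  move=> c c' i i' Hi Hi'; case: (eqVneq c c') => [<-|Hcc] /=; first exact: uA_inj.
  apply/negP => /eqP Heq; have := uA_in c i Hi; rewrite Heq => H.
  by have := A_disj _ _ _ H (uA_in c' i' Hi'); move/eqP: Hcc.
pose g (z : (bool + bool * 'I_a) + bool * 'I_a * 'I_b) : T :=
  match z with
  | inl (inl c) => M c
  | inl (inr (c, i)) => uA c i
  | inr (c, i, j) => lA c i j
  end.
apply: (iso_of (g := g)).
- move=> [[c|[c i]]|[[c i] j]] [[c'|[c' i']]|[[c' i'] j']] /= Heq.
  + by move/eqP: Heq; rewrite HMne => /eqP ->.
  + by move: (A_nm _ c _ (uA_in c' i' (ltn_ord _))); rewrite Heq eqxx.
  + by move: (lA_nm c' c i' j' (ltn_ord _) (ltn_ord _)); rewrite Heq eqxx.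
  + by move: (A_nm _ c' _ (uA_in c i (ltn_ord _))); rewrite Heq eqxx.
  + move/eqP: Heq; rewrite uA_eq // => /andP [/eqP <- /eqP Hii].
    by congr (inl (inr (_, _))); apply: val_inj.
  + have := lA_lf c' i' j' (ltn_ord _) (ltn_ord _); rewrite -Heq => /(Hlfc _ _ _ (uA_in _ _ (ltn_ord _))) Hc.
    by move: (A_nm c' c _ (uA_in c' i' (ltn_ord _))); rewrite Hc eqxx.
  + by move: (lA_nm c c' i j (ltn_ord _) (ltn_ord _)); rewrite Heq eqxx.
  + have := lA_lf c i j (ltn_ord _) (ltn_ord _); rewrite Heq => /(Hlfc _ _ _ (uA_in _ _ (ltn_ord _))) Hc.
    by move: (A_nm c c' _ (uA_in c i (ltn_ord _))); rewrite Hc eqxx.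
  + have H1 := lA_lf c i j (ltn_ord _) (ltn_ord _).
    have H2 := lA_lf c' i' j' (ltn_ord _) (ltn_ord _).
    move: (H1 (uA c i)); rewrite eqxx Heq H2 eq_sym uA_eq // => /andP [/eqP Hc /eqP Hi].
    subst c'; have Hii : i = i' by apply: val_inj.
    subst i'; move/eqP: Heq; rewrite lA_inj // => /eqP Hjj.
    by congr (inr (_, _, _)); apply: val_inj.
- move=> x; case: (Hcl x) => [->|[->|[[c Hx]|[c [u [Hu Hxu]]]]]].
  + by exists (inl (inl true)).
  + by exists (inl (inl false)).
  + have Hi : index x (enum (A c)) < a by rewrite -(HA c) cardE index_mem mem_enum.
    by exists (inl (inr (c, Ordinal Hi))); rewrite /= /uA nth_index ?mem_enum.
  have Hi : index u (enum (A c)) < a by rewrite -(HA c) cardE index_mem mem_enum.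
  have HuA : uA c (index u (enum (A c))) = u by rewrite /uA nth_index ?mem_enum.
  have HxL : x \in Lset (M c) u.
    rewrite inE e_sym (leaf_edge Hxu) /=; apply/negP => /eqP Hxc.
    move: (Hxu (M (~~ c))); rewrite Hxc HM => /esym /eqP Hu'.
    by have := Ain c u Hu; rewrite -Hu' eqxx; case.
  have Hj : index x (enum (Lset (M c) u)) < b by rewrite -(HL c u Hu) cardE index_mem mem_enum.
  exists (inr (c, Ordinal Hi, Ordinal Hj)); rewrite /= /lA HuA.
  by rewrite nth_index ?mem_enum.
- move=> [[c|[c i]]|[[c i] j]] [[c'|[c' i']]|[[c' i'] j']] /=.
  + case: (eqVneq c c') => [<-|Hcc]; first by rewrite e_irr; case: (c).
    by rewrite (bn _ _ Hcc) HM; case: (c).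
  + case: (eqVneq c c') => [<-|Hcc]; first by have [-> _] := Ain c _ (uA_in c i' (ltn_ord _)).
    rewrite eq_sym in Hcc; rewrite (bn _ _ Hcc).
    by apply/esym/negbTE/A_nadj/uA_in.
  + rewrite e_sym (lA_lf c' i' j' (ltn_ord _) (ltn_ord _)); apply/esym/negbTE.
    by rewrite eq_sym (A_nm c' c _ (uA_in c' i' (ltn_ord _))).
  + rewrite e_sym eq_sym.
    case: (eqVneq c c') => [<-|Hcc]; first by have [-> _] := Ain c _ (uA_in c i (ltn_ord _)).
    rewrite (bn _ _ Hcc).
    by apply/esym/negbTE/A_nadj/uA_in.
  + apply/esym/negbTE/negP => He.
    have Hi := uA_in c i (ltn_ord _); have Hi' := uA_in c' i' (ltn_ord _).
    case: (eqVneq c c') => [Hcc|Hcc].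
      subst c'; have [H1 _] := Ain c _ Hi; have [H2 _] := Ain c _ Hi'.
      case: (eqVneq (uA c i) (uA c i')) => [Heq|Hne]; first by move: He; rewrite Heq e_irr.
      by have := T1 (M c) He; rewrite (edge_dist H1) (edge_dist H2).
    have Hc' := bn _ _ Hcc.
    subst c'.
    have S1 : uA c i \in side (M c) (M (~~ c)).
      by have [H1 H2] := Ain c _ Hi; apply: side_nb.
    have S2 : uA (~~ c) i' \in side (M (~~ c)) (M c).
      have [H1 H2] := Ain (~~ c) _ Hi'; rewrite negbK in H2.
      by apply: side_nb => //; rewrite e_sym HM.
    have [Hx _] := no_cross (HM c) S1 S2 He.
    by move: (A_nm c c _ Hi); rewrite Hx eqxx.
  + by rewrite e_sym (lA_lf c' i' j' (ltn_ord _) (ltn_ord _)) uA_eq.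
  + rewrite (lA_lf c i j (ltn_ord _) (ltn_ord _)); apply/esym/negbTE.
    by rewrite eq_sym (A_nm c c' _ (uA_in c i (ltn_ord _))).
  + by rewrite (lA_lf c i j (ltn_ord _) (ltn_ord _)) uA_eq.
  + apply/esym; rewrite (lA_lf c i j (ltn_ord _) (ltn_ord _)); apply/negP => /eqP Heq.
    have := lA_lf c' i' j' (ltn_ord _) (ltn_ord _); rewrite Heq => /(Hlfc _ _ _ (uA_in _ _ (ltn_ord _))) Hc.
    by move: (A_nm c' c _ (uA_in c' i' (ltn_ord _))); rewrite Hc eqxx.
Qed.


Lemma forward : kstat e = 3 -> in_family e.
Proof.
move=> Hk.
have [a0 [b0 [c0 [Hab Hac Hbc]]]] := kstat_ex Hk.
have Hn3 : 2 < n.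
  have Hu : uniq [:: a0; b0; c0].
    rewrite /= !inE !negb_or andbT.
    apply/andP; split; first (apply/andP; split).
    - by apply: contraNneq Hab => ->.
    - by apply: contraNneq Hac => ->.
    - by apply: contraNneq Hbc => ->.
  have := card_uniqP Hu; have := max_card (mem [:: a0; b0; c0]) => /= H1 H2.
  by rewrite H2 in H1.
have Hn2 : 1 < n by lia.
case: (@arg_minnP T a0 xpredT s isT) => m0 _ Hm0.
case: (@arg_maxnP T a0 xpredT s isT) => vM _ HvM.
set s1 := s m0 in Hm0 *; set smax := s vM in HvM *.
have Hmin : forall v, s1 <= s v by move=> v; apply: Hm0.
have Hmax : forall v, s v <= smax by move=> v; apply: HvM.
have LS : forall l p, lf l p -> s l + 2 = s p + n by move=> l p; apply: leaf_status.
have NL : forall v u w, e v u -> e v w -> u != w -> s v < smax.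
  move=> v u w Hu Hw Huw; have := convex Hu Hw Huw; have := Hmax u; have := Hmax w; lia.
have DI : forall v, (exists p, lf v p) \/ exists u w, [/\ e v u, e v w & u != w].
  move=> v; have [p Hp] := has_nb v Hn2.
  case: (dich Hp) => [H|[w [Hw Hwp]]]; first by left; exists p.
  by right; exists p, w; rewrite eq_sym.
have [pM HpM] : exists p, lf vM p.
  case: (DI vM) => // [[u [w [Hu Hw Huw]]]].
  by have := NL _ _ _ Hu Hw Huw; rewrite ltnn.
have [v3 [H31 H3M]] := kstat_third m0 vM Hk.
set y := s v3 in H31 H3M *.
have Hy1 : s1 < y by have := Hmin v3; move: H31; rewrite -/s1; lia.
have HyM : y < smax by have := Hmax v3; move: H3M; rewrite -/smax; lia.
have Hv : forall v, s v = s1 \/ s v = y \/ s v = smax.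
  move=> v; have := kstat_three Hk (_ : s m0 != s v3) (_ : s m0 != s vM) H3M v.
  rewrite -/s1 -/smax -/y !inE.
  move=> /(_ ltac:(lia)) /(_ ltac:(lia)).
  by case/or3P => /eqP ->; auto.
have Lmax : forall l p, lf l p -> s l = smax.
  move=> l p Hl; case: (Hv l) => [H|[H|H]] //.
    by have := LS l p Hl; have := Hmin p; lia.
  have Hp : s p = s1 by have := LS l p Hl; case: (Hv p); lia.
  have Hyn : s1 + n = y + 2 by have := LS l p Hl; lia.
  pose X := [set v | s v == s1].
  have HpX : p \in X by rewrite inE Hp.
  have HG : forall w u, w \notin X -> u \in X -> e u w -> lf w u.
    move=> w u; rewrite !inE => Hw /eqP Hu Huw.
    have Hwy : y <= s w by case: (Hv w) => [H'|[H'|H']]; move: Hw; rewrite H' ?eqxx //; lia.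
    have Hwu : e w u by rewrite e_sym.
    have E := status_edge Hwu; have C := side_card Hwu.
    have Hsz : #|side w u| <= 1 by lia.
    move=> z; case: (eqVneq z u) => [->|Hzu]; first by rewrite Hwu.
    apply/negP => Hwz.
    have H2 : [set w; z] \subset side w u.
      apply/subsetP => t; rewrite in_set2 => /orP [] /eqP ->.
        exact: side_self.
      exact: side_nb.
    by have := subset_leq_card H2; rewrite cards2 (edge_neq Hwz); lia.
  have HvMX : vM \notin X by rewrite inE -/smax; lia.
  have [u [Hu HvMu]] := lemG HpX HG HvMX.
  by have := LS vM u HvMu; move: Hu; rewrite inE -/smax => /eqP; lia.
have F4 : forall v, (exists u w, [/\ e v u, e v w & u != w]) -> s v != s1 ->
    s v = y /\ exists u, [/\ e v u, s u = s1 & forall w, e v w -> w != u -> lf w v].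
  move=> v [u0 [w0 [Hu0 Hw0 Hne]]] Hv1.
  have Hlt := NL _ _ _ Hu0 Hw0 Hne.
  have Hsv : s v = y by case: (Hv v) => [H|[H|H]] //; move: Hv1 Hlt; rewrite H ?eqxx //; lia.
  have [u [Hvu Hsu]] : exists u, e v u /\ s u < s v.
    case: (boolP [exists u, e v u && (s u < s v)]) => [/existsP [u /andP [H1 H2]]|/existsPn H].
      by exists u.
    have Hl : forall u, e v u -> s v <= s u.
      by move=> u Hu; move: (H u); rewrite Hu /= -leqNgt.
    have := min_global Hl m0; have := Hmin v; move: Hv1; rewrite -/s1; lia.
  split => //; exists u; split => //.
    by case: (Hv u) => [H|[H|H]] //; lia.
  move=> w Hvw Hwu.
  have := convex Hvu Hvw (_ : u != w); rewrite eq_sym => /(_ Hwu) Hc.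
  have Hsw : s w = smax by case: (Hv w) => [H|[H|H]] //; lia.
  case: (DI w) => [[p Hwp]|[a [b [Ha Hb Hab']]]].
    have Hvp : v = p by move: (Hwp v); rewrite e_sym Hvw => /esym /eqP.
    by rewrite Hvp.
  by have := NL _ _ _ Ha Hb Hab'; rewrite Hsw ltnn.
have Hyn : y + n = smax + 2.
  case: (DI v3) => [[p Hp]|Hnl].
    by have := Lmax _ _ Hp; rewrite -/y; lia.
  have [_ [u [Hu Hsu Hw]]] := F4 v3 Hnl H31.
  case: Hnl => [a [b [Ha Hb Hab']]].
  have [w [Hvw Hwu]] : exists w, e v3 w /\ w != u.
    case: (eqVneq a u) => [Hau|Hau]; last by exists a.
    by exists b; split => //; rewrite -Hau eq_sym.
  have Hl := Hw w Hvw Hwu; have := LS _ _ Hl; rewrite (Lmax _ _ Hl) -/y; lia.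
have Hsup : forall l p, lf l p -> s p = y.
  by move=> l p Hl; have := LS _ _ Hl; rewrite (Lmax _ _ Hl); lia.
have Mnl : forall m, s m = s1 -> exists u w, [/\ e m u, e m w & u != w].
  move=> m Hm; case: (DI m) => // [[p Hp]].
  by have := Lmax _ _ Hp; lia.
have Mns : forall m l, s m = s1 -> ~ lf l m.
  by move=> m l Hm Hl; have := Hsup _ _ Hl; lia.
have Madj : forall m m', s m = s1 -> s m' = s1 -> m != m' -> e m m'.
  move=> m m' Hm Hm' Hne.
  have Hl : forall u, e m u -> s m <= s u by move=> u _; rewrite Hm.
  case Hd: (d m m') => [|[|k]].
  - by move/dist0: Hd => Hd; rewrite Hd eqxx in Hne.
  - exact: dist1.
  - have [z [Hz Hdz]] := dist_pred Hd.
    by have := min_strict Hl Hd Hz Hdz; have := Hmin z; lia.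
have Sup : forall u m, e m u -> s m = s1 -> s u != s1 ->
    s u = y /\ forall w, e u w -> w != m -> lf w u.
  move=> u m Hmu Hm Hu.
  have Hnl : exists a b, [/\ e u a, e u b & a != b].
    case: (DI u) => // [[p Hp]].
    have Hpm : m = p by move: (Hp m); rewrite e_sym Hmu => /esym /eqP.
    by rewrite -Hpm in Hp; case: (Mns _ _ Hm Hp).
  have [Hsu [u' [Huu' Hsu' Hw]]] := F4 u Hnl Hu.
  split => //.
  case: (eqVneq m u') => [Heq|Hmu']; first by rewrite Heq.
  have Hl := Hw m ltac:(by rewrite e_sym) Hmu'.
  have [a [b [Ha Hb Hab']]] := Mnl m Hm.
  by move: (Hl a) (Hl b); rewrite Ha Hb => /esym /eqP Hau /esym /eqP Hbu; rewrite Hau Hbu eqxx in Hab'.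
have Bc : forall u m, e m u -> s m = s1 -> s u != s1 -> 2 * (#|Lset m u|).+1 + y = s1 + n.
  move=> u m Hmu Hm Hu; have [Hsu Hw] := Sup u m Hmu Hm Hu.
  have := sup_status (_ : e u m) Hw; rewrite e_sym Hmu => /(_ isT); lia.
have CLx : forall x, s x != s1 ->
    (exists m, [/\ s m = s1, e m x & s x = y]) \/
    exists u m, [/\ s m = s1, e m u, s u != s1 & lf x u].
  move=> x Hx; case: (DI x) => [[p Hp]|Hnl].
    right; exists p.
    have Hsp := Hsup _ _ Hp.
    have Hp1 : s p != s1 by lia.
    have Hpnl : exists a b, [/\ e p a, e p b & a != b].
      case: (DI p) => // [[q Hq]]; by have := Lmax _ _ Hq; lia.
    have [_ [m [Hpm Hm _]]] := F4 p Hpnl Hp1.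
    by exists m; split => //; rewrite e_sym.
  have [Hsx [m [Hxm Hm _]]] := F4 x Hnl Hx.
  by left; exists m; split => //; rewrite e_sym.
have Bpos : forall u m, e m u -> s m = s1 -> s u != s1 -> 0 < #|Lset m u|.
  move=> u m Hmu Hm Hu; have [Hsu _] := Sup u m Hmu Hm Hu.
  case: (DI u) => [[p Hp]|[a [b [Ha Hb Hab']]]]; first by have := Lmax _ _ Hp; lia.
  apply/card_gt0P; case: (eqVneq a m) => [Ham|Ham].
    by exists b; rewrite inE Hb -Ham eq_sym.
  by exists a; rewrite inE Ha.
case: (boolP [exists m, (s m == s1) && (m != m0)]) => [/existsP [m1 /andP [/eqP Hm1 Hne]]|/existsPn Huniq].
  have H01 : e m0 m1 by apply: Madj; rewrite // eq_sym.
  have Mset : forall m, s m = s1 -> m = m0 \/ m = m1.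
    move=> m Hm; case: (eqVneq m m0) => [->|H0]; first by left.
    case: (eqVneq m m1) => [->|H1]; first by right.
    have E0 := Madj _ _ (erefl s1) Hm (_ : m0 != m); rewrite eq_sym H0 in E0.
    have E1 := Madj _ _ Hm1 Hm (_ : m1 != m); rewrite eq_sym H1 in E1.
    by have := T1 m0 (E1 isT); rewrite (edge_dist H01) (edge_dist (E0 isT)).
  set M := mc m0 m1.
  have HM1 : forall c, s (M c) = s1 by case.
  have HMe : forall c, e (M c) (M (~~ c)) by case; rewrite /M /mc //= e_sym.
  have Ain : forall c u, u \in Aset m0 m1 c -> [/\ e (M c) u, u != M (~~ c) & s u != s1].
    move=> c u; rewrite inE => /andP [H1 H2]; split => //.
    apply/negP => /eqP /Mset [] Hu.
      by move: H1 H2; case: (c); rewrite /M /mc /= -Hu ?e_irr ?eqxx.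
    by move: H1 H2; case: (c); rewrite /M /mc /= -Hu ?e_irr ?eqxx.
  have [u0 Hu0] : exists u0, u0 \in Aset m0 m1 true.
    have [a [b [Ha Hb Hab']]] := Mnl m0 (erefl _).
    case: (eqVneq a m1) => [Ham|Ham].
      by exists b; rewrite inE Hb /=; rewrite -Ham eq_sym.
    by exists a; rewrite inE Ha.
  set b := #|Lset m0 u0|.
  have HB : forall c u, u \in Aset m0 m1 c -> #|Lset (M c) u| = b.
    move=> c u Hu; have [H1 _ H3] := Ain c u Hu.
    have [H1' _ H3'] := Ain true u0 Hu0.
    have := Bc _ _ H1 (HM1 c) H3; have := Bc _ _ H1' (HM1 true) H3'.
    rewrite /b /M /mc /=; lia.
  have HLf : forall c u, u \in Aset m0 m1 c -> forall w, e u w -> w != M c -> lf w u.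
    by move=> c u Hu; have [H1 _ H3] := Ain c u Hu; have [_ ] := Sup u _ H1 (HM1 c) H3.
  have CL : forall x, x = m0 \/ x = m1 \/ (exists c, x \in Aset m0 m1 c) \/
       exists c u, u \in Aset m0 m1 c /\ lf x u.
    move=> x; case: (eqVneq (s x) s1) => [/Mset [->|->]|Hx]; [by left|by right; left|].
    right; right; case: (CLx x Hx) => [[m [Hm Hmx Hsx]]|[u [m [Hm Hmu Hu Hxu]]]].
      left; case: (Mset m Hm) => Hmm; [exists true|exists false]; rewrite inE -Hmm Hmx /=;
        apply/negP => /eqP Hxm; move: Hx; rewrite Hxm ?Hm1 /s1 eqxx //.
    right; case: (Mset m Hm) => Hmm; [exists true|exists false]; exists u; split => //;
      rewrite inE -Hmm Hmu /=; apply/negP => /eqP Hum; move: Hu; rewrite Hum ?Hm1 /s1 eqxx //.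
  have CL0 : forall x, x = m0 \/ x = m1 \/ x \in Lset m1 m0 \/ x \in Lset m0 m1 \/
      exists u, (u \in Lset m1 m0 \/ u \in Lset m0 m1) /\ lf x u.
    move=> x; case: (CL x) => [H|[H|[[[] H]|[[] [u [Hu Hxu]]]]]]; auto;
      by do 4! right; exists u; auto.
  have CL1 : forall x, x = m1 \/ x = m0 \/ x \in Lset m0 m1 \/ x \in Lset m1 m0 \/
      exists u, (u \in Lset m0 m1 \/ u \in Lset m1 m0) /\ lf x u.
    move=> x; case: (CL x) => [H|[H|[[[] H]|[[] [u [Hu Hxu]]]]]]; auto;
      by do 4! right; exists u; auto.
  have S0 := side_count H01 (fun u Hu => conj (HLf true u Hu) (HB true u Hu)) CL0.
  have H10 : e m1 m0 by rewrite e_sym.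
  have S1 := side_count H10 (fun u Hu => conj (HLf false u Hu) (HB false u Hu)) CL1.
  have E := status_edge H01; rewrite S0 S1 -/s1 Hm1 in E.
  have Ha : #|Lset m1 m0| = #|Lset m0 m1|.
    by apply/eqP; rewrite -(eqn_pmul2r (ltn0Sn b)); apply/eqP; lia.
  right; exists #|Aset m0 m1 true|, b; split; [|split].
  - by apply/card_gt0P; exists u0.
  - by have [H1 _ H3] := Ain true u0 Hu0; apply: Bpos H1 (HM1 true) H3.
  - apply: (iso_dstar H01 _ HB HLf CL).
    by case => //=; rewrite /Aset /mc /= Ha.
have Mu : forall m, s m = s1 -> m = m0.
  move=> m Hm; apply/eqP/negPn/negP => Hne.
  by move: (Huniq m); rewrite Hm eqxx Hne.
have [p [q [Hp Hq Hpq]]] := Mnl m0 (erefl _).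
have Ain : forall u, u \in [set u | e m0 u] -> s u != s1.
  move=> u; rewrite inE => Hu; apply/negP => /eqP /Mu Hu0.
  by move: Hu; rewrite Hu0 e_irr.
have Hq0 : q \in [set u | e m0 u] by rewrite inE.
left; exists #|[set u | e m0 u]|, #|Lset m0 q|; split; [|split].
- have : [set p; q] \subset [set u | e m0 u].
    by apply/subsetP => t; rewrite in_set2 inE => /orP [] /eqP ->.
  by move/subset_leq_card; rewrite cards2 Hpq.
- exact: Bpos Hq (erefl _) (Ain q Hq0).
- apply: iso_star.
  + by exists p, q.
  + move=> u Hu; have Hu' : e m0 u by rewrite inE in Hu.
    have := Bc u m0 Hu' (erefl _) (Ain u Hu); have := Bc q m0 Hq (erefl _) (Ain q Hq0); lia.
  + by move=> u Hu; have := Ain u Hu; move: Hu; rewrite inE => Hu Hu1; have [_] := Sup u m0 Hu (erefl _) Hu1.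
  move=> x; case: (eqVneq (s x) s1) => [/Mu ->|Hx]; first by left.
  right; case: (CLx x Hx) => [[m [Hm Hmx Hsx]]|[u [m [Hm Hmu Hu Hxu]]]].
    by left; rewrite inE -(Mu m Hm).
  by right; exists u; rewrite inE -(Mu m Hm).
Qed.


Lemma back_star m b : 2 <= m -> 1 <= b -> graph_iso e (@star_pend_rel m b) -> kstat e = 3.
Proof.
move=> Hm Hb [f [Hbij He]].
have Hn : n = 1 + m * b.+1.
  by rewrite (bij_eq_card Hbij) card_option card_sum card_prod !card_ord mulnS; lia.
case: Hbij => g Hfg Hgf.
have Ee : forall x y, e x y = star_pend_rel (f x) (f y) by move=> x y; rewrite He.
have Hfeq : forall x z, (x == g z) = (f x == z).
  move=> x z; apply/idP/idP => /eqP H; apply/eqP.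
    by rewrite H Hgf.
  by rewrite -H Hfg.
set c := g None.
pose U i := g (Some (inl i)).
pose W i j := g (Some (inr (i, j))).
have HcU : forall i, e (U i) c by move=> i; rewrite Ee /U /c !Hgf.
have HW : forall i j, lf (W i j) (U i).
  move=> i j z; rewrite Ee /W Hgf /U Hfeq.
  case: (f z) => [[i'|[i' j']]|] //=.
have HUnb : forall i w, e (U i) w -> w != c -> exists j, w = W i j.
  move=> i w; rewrite Ee /U /c Hgf Hfeq => H1 H2.
  have Hw := Hfg w; move: H1 H2 Hw.
  case: (f w) => [[i'|[i' j']]|] //= /eqP <- _ <-; by exists j'.
have HUlf : forall i w, e (U i) w -> w != c -> lf w (U i).
  by move=> i w H1 H2; have [j ->] := HUnb i w H1 H2.
have HL : forall i, #|Lset c (U i)| = b.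
  move=> i.
  have -> : Lset c (U i) = [set W i j | j in 'I_b].
    apply/setP => w; rewrite inE; apply/andP/imsetP => [[H1 H2]|[j _ ->]].
      by have [j ->] := HUnb i w H1 H2; exists j.
    split; first by rewrite e_sym (leaf_edge (HW i j)).
    by rewrite Hfeq /W Hgf.
  rewrite card_imset ?card_ord //.
  by move=> j j' /(congr1 f); rewrite /W !Hgf => [[]].
have SU : forall i, s (U i) + 2 * b.+1 = s c + n.
  by move=> i; rewrite -(HL i); apply: sup_status; [apply: HcU|apply: HUlf].
have SW : forall i j, s (W i j) + 2 = s (U i) + n.
  by move=> i j; apply: leaf_status.
have Hm0 : 0 < m by lia.
set i0 := Ordinal Hm0. set j0 := Ordinal Hb.
have Hnb : 2 * b.+1 < n by rewrite Hn; have := leq_mul Hm (leqnn b.+1); lia.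
have S0 := SU i0; have S1 := SW i0 j0.
apply: (kstat_eq3 (a := c) (b := U i0) (c := W i0 j0)).
- apply/eqP; lia.
- apply/eqP; lia.
- apply/eqP; lia.
move=> v; rewrite !inE -[v]Hfg.
case: (f v) => [[i|[i j]]|].
- change (g (Some (inl i))) with (U i).
  have E : s (U i) = s (U i0) by have := SU i; lia.
  by rewrite E eqxx orbT.
- change (g (Some (inr (i, j)))) with (W i j).
  have E : s (W i j) = s (W i0 j0) by have := SW i j; have := SU i; lia.
  by rewrite E eqxx !orbT.
- by rewrite eqxx.
Qed.


Lemma back_dstar a b : 1 <= a -> 1 <= b -> graph_iso e (@dstar_pend_rel a b) -> kstat e = 3.
Proof.
move=> Ha Hb [f [Hbij He]].
have Hn : n = 2 + 2 * a * b.+1.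
  by rewrite (bij_eq_card Hbij) !card_sum !card_prod card_bool !card_ord mulnS; lia.
case: Hbij => g Hfg Hgf.
have Ee : forall x y, e x y = dstar_pend_rel (f x) (f y) by move=> x y; rewrite He.
have Hfeq : forall x z, (x == g z) = (f x == z).
  move=> x z; apply/idP/idP => /eqP H; apply/eqP.
    by rewrite H Hgf.
  by rewrite -H Hfg.
pose M c := g (inl (inl c)).
pose U c i := g (inl (inr (c, i))).
pose W c i j := g (inr (c, i, j)).
have HMM : forall c, e (M c) (M (~~ c)) by move=> c; rewrite Ee /M !Hgf /=; case: c.
have HUM : forall c i, e (U c i) (M c) by move=> c i; rewrite Ee /U /M !Hgf /=.
have HW : forall c i j, lf (W c i j) (U c i).
  move=> c i j z; rewrite Ee /W Hgf /U Hfeq.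
  by case: (f z) => [[c'|[c' i']]|[[c' i'] j']] //=.
have HUnb : forall c i w, e (U c i) w -> w != M c -> exists j, w = W c i j.
  move=> c i w; rewrite Ee /U /M Hgf Hfeq => H1 H2.
  have Hw := Hfg w; move: H1 H2 Hw.
  case: (f w) => [[c'|[c' i']]|[[c' i'] j']] //=.
    by move=> /eqP -> /eqP.
  by case/andP => /eqP <- /eqP <- _ <-; exists j'.
have HUlf : forall c i w, e (U c i) w -> w != M c -> lf w (U c i).
  by move=> c i w H1 H2; have [j ->] := HUnb c i w H1 H2.
have HL : forall c i, #|Lset (M c) (U c i)| = b.
  move=> c i.
  have -> : Lset (M c) (U c i) = [set W c i j | j in 'I_b].
    apply/setP => w; rewrite inE; apply/andP/imsetP => [[H1 H2]|[j _ ->]].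
      by have [j ->] := HUnb c i w H1 H2; exists j.
    split; first by rewrite e_sym (leaf_edge (HW c i j)).
    by rewrite Hfeq /W Hgf.
  rewrite card_imset ?card_ord //.
  by move=> j j' /(congr1 f); rewrite /W !Hgf => [[]].
have HA : forall c, Lset (M (~~ c)) (M c) = [set U c i | i in 'I_a].
  move=> c; apply/setP => w; rewrite inE; apply/andP/imsetP => [[H1 H2]|[i _ ->]].
    move: H1 H2; rewrite Ee /M Hgf Hfeq -{3}(Hfg w).
    case: (f w) => [[c'|[c' i']]|[[c' i'] j']] //=.
      by move=> Hcc; move: Hcc; case: (c); case: (c').
    by move=> /eqP <- _; exists i'.
  split; first by rewrite e_sym HUM.
  by rewrite Hfeq /U Hgf.
have HAc : forall c, #|Lset (M (~~ c)) (M c)| = a.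
  move=> c; rewrite HA card_imset ?card_ord //.
  by move=> i i' /(congr1 f); rewrite /U !Hgf => [[]].
have HAi : forall c u, u \in Lset (M (~~ c)) (M c) -> exists i, u = U c i.
  by move=> c u; rewrite HA => /imsetP [i _ ->]; exists i.
have CL : forall c x, x = M c \/ x = M (~~ c) \/ x \in Lset (M (~~ c)) (M c) \/
      x \in Lset (M c) (M (~~ c)) \/
      exists u, (u \in Lset (M (~~ c)) (M c) \/ u \in Lset (M c) (M (~~ c))) /\ lf x u.
  move=> c x; rewrite -(Hfg x).
  have HU : forall c' i, U c' i \in Lset (M (~~ c')) (M c') by move=> c' i; rewrite HA; apply: imset_f.
  have HU' : forall i, U (~~ c) i \in Lset (M c) (M (~~ c)) by move=> i; have := HU (~~ c) i; rewrite negbK.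
  case: (f x) => [[c'|[c' i]]|[[c' i] j]].
  - case: (eqVneq c' c) => [->|Hcc]; first by left.
    have -> : c' = ~~ c by move: Hcc; case: (c); case: (c').
    by right; left.
  - case: (eqVneq c' c) => [->|Hcc]; first by do 2 right; left; apply: HU.
    have -> : c' = ~~ c by move: Hcc; case: (c); case: (c').
    by do 3 right; left; apply: HU'.
  - do 4 right; exists (U c' i); split; last exact: HW.
    case: (eqVneq c' c) => [->|Hcc]; first by left; apply: HU.
    have -> : c' = ~~ c by move: Hcc; case: (c); case: (c').
    by right; apply: HU'.
have SC : forall c, #|side (M c) (M (~~ c))| = 1 + a * b.+1.
  move=> c; rewrite -(HAc c); apply: side_count => //.
  move=> u /HAi [i ->]; split; [exact: HUlf|exact: HL].
have HMs : forall c, s (M c) = s (M true).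
  case => //; have := status_edge (HMM false); rewrite !SC /=; lia.
have SU : forall c i, s (U c i) + 2 * b.+1 = s (M true) + n.
  by move=> c i; rewrite -(HMs c) -(HL c i); apply: sup_status; [apply: HUM|apply: HUlf].
have SW : forall c i j, s (W c i j) + 2 = s (U c i) + n.
  by move=> c i j; apply: leaf_status.
set i0 := Ordinal Ha. set j0 := Ordinal Hb.
have Hnb : 2 * b.+1 < n by rewrite Hn; have := leq_mul (leqnn 2) (leq_mul Ha (leqnn b.+1)); lia.
have S0 := SU true i0; have S1 := SW true i0 j0.
apply: (kstat_eq3 (a := M true) (b := U true i0) (c := W true i0 j0)).
- apply/eqP; lia.
- apply/eqP; lia.
- apply/eqP; lia.
move=> v; rewrite !inE -[v]Hfg.
case: (f v) => [[c|[c i]]|[[c i] j]].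
- change (g (inl (inl c))) with (M c).
  by rewrite HMs eqxx.
- change (g (inl (inr (c, i)))) with (U c i).
  have E : s (U c i) = s (U true i0) by have := SU c i; lia.
  by rewrite E eqxx orbT.
- change (g (inr (c, i, j))) with (W c i j).
  have E : s (W c i j) = s (W true i0 j0) by have := SW c i j; have := SU c i; lia.
  by rewrite E eqxx !orbT.
Qed.

End Tree.

Unset Implicit Arguments.

Theorem theorem3p6 (T : finType) (e : rel T)
  (e_sym : symmetric e) (e_irr : irreflexive e) (T_tree : is_tree e) :
  kstat e = 3 <-> in_family e.
Proof.
case: T_tree => conn acyc; split.
  exact: (forward e_sym e_irr conn acyc).
case => [[m [b [Hm [Hb Hi]]]]|[a [b [Ha [Hb Hi]]]]].
  exact: (back_star e_sym e_irr conn acyc Hm Hb Hi).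
exact: (back_dstar e_sym e_irr conn acyc Ha Hb Hi).
Qed.
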